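(* If $r\ge 2$, then the glued binary tree $GT(r)$ satisfies $\mu_{\rm o}(GT(r))=2^r$, and $GT(r)$ has exactly one $\mu_{\rm o}$-set.
   Context: A perfect binary tree of depth $r\ge1$ is a rooted tree in which every non-leaf vertex has exactly $2$ children and all leaves have depth $r$. The glued binary tree $GT(r)$ is obtained from two copies of the perfect binary tree of depth $r$ by pairwise identifying their leaves (via a fixed isomorphism of the copies). For $S\subseteq V(G)$, two vertices $u,v$ are $S$-visible if there exists a shortest $u,v$-path $P$ with $V(P)\cap S\subseteq\{u,v\}$; $S$ is a mutual-visibility set if every two vertices of $S$ are $S$-visible. $S$ is an outer mutual-visibility set if it is a mutual-visibility set and every pair $u\in S$, $v\in V(G)\setminus S$ is $S$-visible. A largest outer mutual-visibility set is a $\mu_{\rm o}$-set, and its size is the outer mutual-visibility number $\mu_{\rm o}(G)$. *)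

(* Defs.v *)
From mathcomp Require Import all_boot.
Set Implicit Arguments. Unset Strict Implicit. Unset Printing Implicit Defensive.

Section Visibility.
Variables (T : finType) (e : rel T).

(* A u,v-walk is given by the sequence p of vertices after u;
   its vertex list is u :: p and its length is size p. *)
Definition walk (u v : T) (p : seq T) : Prop := path e u p /\ last u p = v.

Definition shortest_path (u v : T) (p : seq T) : Prop :=
  walk u v p /\ forall q, walk u v q -> size p <= size q.

Definition visible (S : {set T}) (u v : T) : Prop :=
  exists p, shortest_path u v p /\
    forall x, x \in u :: p -> x \in S -> (x == u) || (x == v).

Definition mutual_visibility_set (S : {set T}) : Prop :=
  forall u v, u \in S -> v \in S -> visible S u v.

Definition outer_mutual_visibility_set (S : {set T}) : Prop :=
  mutual_visibility_set S /\
  forall u v, u \in S -> v \notin S -> visible S u v.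

Definition muo_set (S : {set T}) : Prop :=
  outer_mutual_visibility_set S /\
  forall S', outer_mutual_visibility_set S' -> #|S'| <= #|S|.

End Visibility.

(* Perfect binary tree of depth r in heap numbering: nodes 1 .. 2^(r+1)-1,
   children of k are 2k and 2k+1, leaves are 2^r .. 2^(r+1)-1.
   A vertex of GT(r) is a pair (b, k): b selects the copy of the tree.
   Leaves are identified across copies: a leaf is represented only with
   b = false.  Internal nodes (k < 2^r) exist in both copies. *)
Definition gt_valid (r : nat) (x : bool * 'I_(2 ^ r.+1)) : bool :=
  (0 < val x.2) && (~~ x.1 || (val x.2 < 2 ^ r)).

Definition GTV (r : nat) : finType := {x : bool * 'I_(2 ^ r.+1) | @gt_valid r x}.

Definition gt_parent (r : nat) (x y : GTV r) : bool :=
  ((val (val y).2)./2 == val (val x).2) &&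
  ((2 ^ r <= val (val y).2) || ((val x).1 == (val y).1)).

Definition GTadj (r : nat) : rel (GTV r) :=
  fun x y => gt_parent x y || gt_parent y x.

(* Main.v *)
Require Import Defs.
From Stdlib Require Import Classical.
From mathcomp Require Import all_boot zify.
Set Implicit Arguments. Unset Strict Implicit. Unset Printing Implicit Defensive.

Fixpoint dTf (n a c : nat) : nat :=
  match n with 0 => 0 | n'.+1 =>
    if a == c then 0 else if c < a then (dTf n' a./2 c).+1 else (dTf n' a c./2).+1 end.
Definition dT a c := dTf (a + c).+1 a c.

Lemma dTf_stable n m a c : a + c < n -> a + c < m -> dTf n a c = dTf m a c.
Proof.
elim: n m a c => [|n IH] [|m] a c //= Hn Hm.
case: eqP => // /eqP ne; case: ltnP => H; congr S; apply: IH; lia.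
Qed.

Lemma dT_eq a c : dT a c =
  if a == c then 0 else if c < a then (dT a./2 c).+1 else (dT a c./2).+1.
Proof.
rewrite [LHS]/dT [LHS]/=; case: eqP => // /eqP ne; case: ltnP => H; congr S;
rewrite /dT; apply: dTf_stable; lia.
Qed.

Lemma dTaa a : dT a a = 0.
Proof. by rewrite dT_eq eqxx. Qed.

Lemma meas_ind (P : nat -> nat -> Prop) :
  (forall a c, (forall a' c', a' + c' < a + c -> P a' c') -> P a c) ->
  forall a c, P a c.
Proof.
move=> H a c; have [n Hn] : exists n, a + c < n by exists (a+c).+1.
elim: n a c Hn => [|n IH] a c Hn; first by [].
apply: H => a' c' h; apply: IH; lia.
Qed.

Lemma dT_sym a c : dT a c = dT c a.
Proof.
move: a c; apply: meas_ind => a c IH.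
rewrite dT_eq [dT c a]dT_eq eq_sym.
case: eqP => // /eqP ne; case: (ltngtP c a) => H //.
- by rewrite IH //; lia.
- by rewrite IH //; lia.
- by move: ne; rewrite H eqxx.
Qed.

Lemma dT_lip a j : dT a j <= (dT a j./2).+1 /\ dT a j./2 <= (dT a j).+1.
Proof.
move: a j; apply: meas_ind => a j IH.
case: (eqVneq a j) => [<-|ne].
  rewrite dTaa; split => //.
  rewrite dT_eq; case: eqP => // _.
  case: ltnP => H; first by rewrite dTaa.
  have -> : a = 0 by lia. by rewrite dTaa.
case: (ltngtP j a) => H.
- rewrite dT_eq (negbTE ne) H [dT a j./2]dT_eq.
  have -> : (a == j./2) = false by apply/eqP; lia.
  have -> : j./2 < a by lia.
  have := IH a./2 j ltac:(lia). lia.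
- rewrite [dT a j]dT_eq (negbTE ne) ltnNge (ltnW H) /=. lia.
- by move: ne; rewrite H eqxx.
Qed.

Lemma dT_tri a b c : dT a c <= dT a b + dT b c.
Proof.
move: b c; apply: meas_ind => b c IH.
case: (eqVneq b c) => [<-|ne]; first by rewrite dTaa addn0.
rewrite [dT b c]dT_eq (negbTE ne).
case: ltnP => H.
- have := IH b./2 c ltac:(lia).
  have := dT_lip a b. lia.
- have := IH b c./2 ltac:(lia).
  have := dT_lip a c. lia.
Qed.

Definition desc (k j : nat) : Prop := exists i, j %/ 2 ^ i = k.

Lemma desc_refl k : desc k k.
Proof. by exists 0; rewrite expn0 divn1. Qed.

Lemma desc_half k j : desc k j./2 -> desc k j.
Proof.
case=> i <-; exists i.+1; by rewrite expnS divnMA -divn2.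
Qed.

Lemma desc_inv k j : desc k j -> j = k \/ desc k j./2.
Proof.
case=> [[|i]]; first by rewrite expn0 divn1; left.
rewrite expnS divnMA -divn2 => h; right; by exists i.
Qed.

Lemma desc_le k j : desc k j -> k <= j.
Proof. by case=> i <-; apply: leq_div. Qed.

Lemma dT_D1 a z : 0 < z -> ~ desc z a -> dT a z = (dT a z./2).+1.
Proof.
move: a z; apply: meas_ind => a z IH zpos nd.
have ne : a != z by apply/eqP => E; apply: nd; rewrite E; apply: desc_refl.
rewrite dT_eq (negbTE ne); case: ltnP => H; last first.
  done.
have nd' : ~ desc z a./2 by move=> /desc_half.
rewrite IH //; last by lia.
rewrite [dT a z./2]dT_eq.
have -> : (a == z./2) = false by apply/eqP; lia.
have -> : z./2 < a by lia.
done.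
Qed.

Fixpoint tpf (n a c : nat) : seq nat :=
  match n with 0 => [::] | n'.+1 =>
    if a == c then [::] else if c < a then a./2 :: tpf n' a./2 c
    else rcons (tpf n' a c./2) c end.

Section GT.
Variable r : nat.
Local Notation V := (GTV r).
Local Notation adj := (@GTadj r).

Definition idx (x : V) : nat := val (val x).2.
Definition cp (x : V) : bool := (val x).1.
Definition leafb (x : V) : bool := 2 ^ r <= idx x.

Lemma idx_pos x : 0 < idx x.
Proof. case: x => [[b k]] h; rewrite /idx /=; by move: h => /andP[]. Qed.
Lemma idx_lt x : idx x < 2 ^ r.+1.
Proof. case: x => [[b k]] h; rewrite /idx /=; exact: ltn_ord. Qed.
Lemma idx_range x : 0 < idx x < 2 ^ r.+1.
Proof. by rewrite idx_pos idx_lt. Qed.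
Lemma cp_int x : cp x -> idx x < 2 ^ r.
Proof. case: x => [[b k]] h; rewrite /cp /idx /=; move: h => /andP[_]; by case: b. Qed.
Lemma leaf_cp x : leafb x -> cp x = false.
Proof. rewrite /leafb => h; apply/negP => /cp_int; lia. Qed.

Lemma GTV_inj x y : idx x = idx y -> cp x = cp y -> x = y.
Proof.
case: x y => [[b k]] hx [[b' k'] hy]; rewrite /idx /cp /= => E1 E2.
apply: val_inj => /=; congr pair => //; exact: val_inj.
Qed.

Lemma two_pos : 0 < 2 ^ r.+1. Proof. by rewrite expn_gt0. Qed.
Definition ordk (k : nat) : 'I_(2 ^ r.+1) := insubd (Ordinal two_pos) k.
Lemma ordkE k : k < 2 ^ r.+1 -> val (ordk k) = k.
Proof. by move=> h; rewrite /ordk val_insubd h. Qed.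
Lemma one_lt : 1 < 2 ^ r.+1.
Proof. rewrite expnS; have := expn_gt0 2 r; lia. Qed.
Lemma root_ok : gt_valid (false, ordk 1).
Proof. by rewrite /gt_valid /= ordkE // one_lt. Qed.
Definition rootv : V := exist (fun x => is_true (gt_valid x)) _ root_ok.
Definition mkv (b : bool) (k : nat) : V := insubd rootv (b && (k < 2 ^ r), ordk k).

Lemma mkvE b k : 0 < k < 2 ^ r.+1 ->
  idx (mkv b k) = k /\ cp (mkv b k) = b && (k < 2 ^ r).
Proof.
move=> /andP[h1 h2].
have ok : gt_valid (b && (k < 2 ^ r), ordk k).
  rewrite /gt_valid /= ordkE // h1 /=; by case: b; case: (k < 2^r).
by rewrite /mkv /idx /cp val_insubd ok /= ordkE.
Qed.

Lemma mkv_idx x : mkv (cp x) (idx x) = x.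
Proof.
have [E1 E2] := mkvE (cp x) (idx_range x).
 apply: GTV_inj => //; rewrite E2.
by case E: (cp x) => //=; rewrite cp_int.
Qed.

Lemma mkv_leaf b x : leafb x -> mkv b (idx x) = x.
Proof.
move=> hl; have [E1 E2] := mkvE b (idx_range x).
apply: GTV_inj => //; rewrite E2 leaf_cp //.
by move: hl; rewrite /leafb; case: ltnP => //; rewrite andbF.
Qed.

Lemma adjE x y : adj x y =
  ((idx y)./2 == idx x) && (leafb y || (cp x == cp y)) ||
  ((idx x)./2 == idx y) && (leafb x || (cp y == cp x)).
Proof. by []. Qed.

Lemma adj_sym x y : adj x y = adj y x.
Proof. by rewrite !adjE orbC. Qed.

Lemma adj_idx x y : adj x y -> (idx y)./2 = idx x \/ (idx x)./2 = idx y.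
Proof. by rewrite adjE => /orP[/andP[/eqP -> _]|/andP[/eqP -> _]]; [left|right]. Qed.

Lemma adj_dT a x y : adj x y -> dT a (idx y) <= (dT a (idx x)).+1.
Proof.
case/adj_idx => <-; have := dT_lip a (idx y); have := dT_lip a (idx x); lia.
Qed.

Lemma path_dT a u p : path adj u p -> dT a (idx (last u p)) <= dT a (idx u) + size p.
Proof.
elim: p u => [|w p IH] u /=; first by rewrite addn0.
case/andP => h1 /IH H; have H2 := adj_dT a h1.
by rewrite addnS -addSn (leq_trans H) // leq_add2r.
Qed.

Lemma walk_dT u v p : walk adj u v p -> dT (idx u) (idx v) <= size p.
Proof. by case=> hp <-; have := path_dT (idx u) hp; rewrite dTaa. Qed.

Lemma walk_split u v p w : walk adj u v p -> w \in u :: p ->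
  exists p1 p2, p = p1 ++ p2 /\ walk adj u w p1 /\ walk adj w v p2.
Proof.
case=> hp hl; rewrite inE; case: eqP => [->|_] /= hw.
  by exists [::], p.
case/splitPr: hw hp hl => p1 p2 hp hl.
exists (rcons p1 w), p2; rewrite cat_rcons; split => //.
move: hp; rewrite -cat_rcons cat_path last_rcons => /andP[h1 h2].
split; split => //; first by rewrite last_rcons.
by rewrite -hl -cat_rcons last_cat last_rcons.
Qed.

Lemma adj_int_cp x y : adj x y -> ~~ leafb x -> ~~ leafb y -> cp x = cp y.
Proof.
rewrite adjE => /orP[]/andP[_]; rewrite ?(negbTE _) // => h /negbTE hx /negbTE hy.
  by move: h; rewrite hy => /eqP.
by move: h; rewrite hx => /eqP.
Qed.

Lemma path_int_cp x p : path adj x p -> all (fun y => ~~ leafb y) (x :: p) ->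
  cp (last x p) = cp x.
Proof.
elim: p x => [|w p IH] x //= /andP[h1 h2] /and3P[hx hw hp].
rewrite IH //=; last by rewrite hw.
by rewrite (adj_int_cp h1).
Qed.

Lemma cut_down u v p k : walk adj u v p -> desc k (idx u) -> ~ desc k (idx v) ->
  (exists2 y, y \in u :: p & idx y = k) /\ (exists2 y, y \in u :: p & idx y = k./2).
Proof.
case=> hp <-; elim: p u hp => [|w p IH] u /=; first by move=> _ h /(_ h).
case/andP => h1 h2 hu hv.
case: (classic (desc k (idx w))) => hw.
  have [[y hy1 hy2] [z hz1 hz2]] := IH w h2 hw hv.
  by split; [exists y|exists z] => //; rewrite in_cons; apply/orP; right.
case: (adj_idx h1) => E.
  by exfalso; apply: hw; apply: desc_half; rewrite E.
case: (desc_inv hu) => E2; last by exfalso; apply: hw; rewrite -E.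
split; first by exists u; rewrite ?inE ?eqxx.
by exists w; rewrite ?inE ?eqxx ?orbT // -E E2.
Qed.

Lemma cut_up u v p k : walk adj u v p -> ~ desc k (idx u) -> desc k (idx v) ->
  exists2 y, y \in u :: p & idx y = k.
Proof.
case=> hp <-; elim: p u hp => [|w p IH] u /=; first by move=> _ h /h.
case/andP => h1 h2 hu hv.
case: (classic (desc k (idx w))) => hw; last first.
  by have [y hy1 hy2] := IH w h2 hw hv; exists y => //; rewrite in_cons; apply/orP; right.
case: (adj_idx h1) => E.
  case: (desc_inv hw) => E2; last by exfalso; apply: hu; rewrite -E.
  by exists w; rewrite ?inE ?eqxx ?orbT.
by exfalso; apply: hu; apply: desc_half; rewrite E.
Qed.

Lemma SW x y p : walk adj x y p -> ~~ leafb x -> ~~ leafb y -> cp x != cp y ->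
  dT (idx x) (idx y) + 2 <= size p.
Proof.
move=> hw hx hy hc.
have [hz|hz] := boolP (has leafb (x :: p)); last first.
  exfalso; move: hc; case: hw => hp hl.
  rewrite -hl path_int_cp ?eqxx //.
  by move: hz; rewrite -all_predC; exact: id.
case/hasP: hz => z hz1 hz2.
have [p1 [p2 [E [w1 w2]]]] := walk_split hw hz1.
have d1 := walk_dT w1; have d2 := walk_dT w2.
have zpos := idx_pos z.
have nd : forall a, ~~ (2 ^ r <= a) -> ~ desc (idx z) a.
  by move=> a ha /desc_le; move: hz2 ha; rewrite /leafb; lia.
rewrite (dT_D1 zpos (nd _ hx)) in d1.
rewrite dT_sym (dT_D1 zpos (nd _ hy)) dT_sym in d2.
have := dT_tri (idx x) (idx z)./2 (idx y).
rewrite E size_cat; lia.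
Qed.


Lemma adj_mkv b j : 2 <= j < 2 ^ r.+1 -> adj (mkv b j./2) (mkv b j).
Proof.
move=> /andP[h1 h2].
have h3 : 0 < j./2 < 2 ^ r.+1 by apply/andP; split; lia.
have [E1 E2] := mkvE b (k:=j) ltac:(apply/andP; split; lia).
have [E3 E4] := mkvE b h3.
have h4 : j./2 < 2 ^ r by move: h2; rewrite expnS; lia.
rewrite adjE E1 E3 eqxx /= E2 E4 h4 andbT /leafb E1.
by case: (ltnP j (2 ^ r)) => //=; rewrite andbT eqxx orbT.
Qed.

Lemma tpf_walk b n a c : a + c < n -> 0 < a < 2 ^ r.+1 -> 0 < c < 2 ^ r.+1 ->
  walk adj (mkv b a) (mkv b c) (map (mkv b) (tpf n a c)) /\
  (forall w, w \in tpf n a c -> (0 < w < 2 ^ r.+1) /\ (w < 2 ^ r \/ w = c)).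
Proof.
elim: n a c => [|n IH] a c //= hn ha hc.
case: eqP => [->|ne]; first by split.
have hr2 : forall j, j < 2 ^ r.+1 -> j./2 < 2 ^ r by move=> j; rewrite expnS; lia.
case: ltnP => H.
- have ha2 : 0 < a./2 < 2 ^ r.+1 by apply/andP; split; lia.
  have [[wp wl] wm] := IH a./2 c ltac:(lia) ha2 hc.
  split.
    split => //=; rewrite wp andbT adj_sym; apply: adj_mkv; apply/andP; split; lia.
  move=> w; rewrite in_cons => /orP[/eqP ->|/wm //].
  split => //; left; apply: hr2; lia.
- have hc2 : 0 < c./2 < 2 ^ r.+1 by apply/andP; split; lia.
  have [[wp wl] wm] := IH a c./2 ltac:(lia) ha hc2.
  split.
    rewrite map_rcons; split; last by rewrite last_rcons.
    rewrite rcons_path wp wl /=; apply: adj_mkv; apply/andP; split; lia.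
  move=> w; rewrite mem_rcons in_cons => /orP[/eqP ->|/wm [h1 h2]]; first by split; auto.
  split => //; left; case: h2 => // ->; apply: hr2; lia.
Qed.

Lemma tpf_size n a c : a + c < n -> size (tpf n a c) = dT a c.
Proof.
elim: n a c => [|n IH] a c //= hn.
rewrite dT_eq; case: eqP => // ne; case: ltnP => H /=.
  by rewrite IH //; lia.
by rewrite size_rcons IH //; lia.
Qed.

Lemma ewalk b a c : 0 < a < 2 ^ r.+1 -> 0 < c < 2 ^ r.+1 ->
  exists p, walk adj (mkv b a) (mkv b c) p /\ size p = dT a c.
Proof.
move=> ha hc; exists (map (mkv b) (tpf (a + c).+1 a c)).
have [w _] := tpf_walk b (n:=(a+c).+1) (leqnn _) ha hc.
by rewrite size_map tpf_size.
Qed.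

Definition leaves : {set V} := [set x | leafb x].

Lemma leaves_vis u v : leafb u -> visible adj leaves u v.
Proof.
move=> hu; set b := cp v.
have [[hp hl] hm] := tpf_walk b (n:=(idx u + idx v).+1) (leqnn _) (idx_range u) (idx_range v).
rewrite mkv_leaf // mkv_idx in hp hl.
exists (map (mkv b) (tpf (idx u + idx v).+1 (idx u) (idx v))); split.
  split; first by [].
  move=> q hq; rewrite size_map tpf_size //; exact: walk_dT hq.
move=> x; rewrite in_cons => /orP[/eqP ->|]; first by rewrite eqxx.
case/mapP => w hw ->; rewrite inE => hl'.
have [h1 [h3|h3]] := hm w hw.
  have [E1 _] := mkvE b h1.
  by move: hl'; rewrite /leafb E1 leqNgt h3.
by apply/orP; right; rewrite h3 mkv_idx.
Qed.

Lemma leaves_omv : outer_mutual_visibility_set adj leaves.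
Proof. by split => u v; rewrite inE => hu _; apply: leaves_vis. Qed.


Lemma cp_of b x : mkv b (idx x) = x -> ~~ leafb x -> cp x = b.
Proof.
move=> hx hl; have [_ E] := mkvE b (idx_range x); rewrite hx in E.
by rewrite E; move: hl; rewrite /leafb -ltnNge => ->; rewrite andbT.
Qed.

Lemma vis_all (S : {set V}) u v : outer_mutual_visibility_set adj S -> u \in S -> visible adj S u v.
Proof. case=> h1 h2 hu; case: (boolP (v \in S)) => hv; [exact: h1|exact: h2]. Qed.

Lemma ewalk_x b u v : mkv b (idx u) = u -> mkv b (idx v) = v ->
  exists p, walk adj u v p /\ size p = dT (idx u) (idx v).
Proof.
move=> hu hv; have := ewalk b (idx_range u) (idx_range v); by rewrite hu hv.
Qed.

Lemma block (S : {set V}) b k u v : 0 < k < 2 ^ r -> mkv b k \in S ->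
  mkv b (idx u) = u -> mkv b (idx v) = v -> (~~ leafb u \/ ~~ leafb v) ->
  mkv b k != u -> mkv b k != v ->
  (forall p, walk adj u v p -> exists2 y, y \in u :: p & idx y = k) ->
  ~ visible adj S u v.
Proof.
move=> /andP[k1 k2] hx hu hv hint hxu hxv hcut [p [[hw hmin] hint2]].
have [y hy1 hy2] := hcut p hw.
have hkr : 0 < k < 2 ^ r.+1 by apply/andP; split; rewrite ?expnS; lia.
have [Ek Eb] := mkvE b hkr; rewrite k2 andbT in Eb.
case: (eqVneq y (mkv b k)) => [Ey|ne].
  have := hint2 y hy1; rewrite Ey hx => /(_ isT) /orP[].
    by rewrite (negbTE hxu).
  by rewrite (negbTE hxv).
have yint : ~~ leafb y by rewrite /leafb hy2 -ltnNge.
have cpy : cp y != b.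
  apply/eqP => E; move: ne; by rewrite -E -hy2 mkv_idx eqxx.
have [p1 [p2 [E [w1 w2]]]] := walk_split hw hy1.
have [q [wq sq]] := ewalk_x hu hv.
have := hmin q wq; rewrite sq E size_cat => hs.
have := dT_tri (idx u) k (idx v).
case: hint => hi.
- have cu := cp_of hu hi.
  have := SW w1 hi yint; rewrite cu eq_sym hy2 => /(_ cpy).
  have := walk_dT w2; rewrite hy2. lia.
- have cv := cp_of hv hi.
  have := SW w2 yint hi; rewrite cv hy2 => /(_ cpy).
  have := walk_dT w1; rewrite hy2. lia.
Qed.

Lemma desc23 j : 2 <= j -> desc 2 j \/ desc 3 j.
Proof.
have H := @meas_ind (fun j _ => 2 <= j -> desc 2 j \/ desc 3 j).
apply: (H _ j 0) => {}j c IH hj.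
case: (ltnP j 4) => h4.
  have: (j == 2) || (j == 3) by lia.
  by case/orP => /eqP ->; [left|right]; apply: desc_refl.
have [h|h] := IH j./2 c ltac:(lia) ltac:(lia); [left|right]; exact: desc_half.
Qed.

Lemma F (S : {set V}) x u : 2 <= r -> outer_mutual_visibility_set adj S ->
  x \in S -> ~~ leafb x -> u \in S -> u != x -> mkv (cp x) (idx u) = u ->
  leafb u /\ ~ desc (idx x) (idx u).
Proof.
move=> hr hS hx xint hu neux hcu.
set b := cp x; set k := idx x.
have hxk : mkv b k = x by rewrite mkv_idx.
have hk : 0 < k < 2 ^ r by rewrite /k idx_pos /= ltnNge.
have hkr : 0 < k < 2 ^ r.+1 by apply/andP; split; rewrite ?expnS; lia.
have r4 : 4 <= 2 ^ r by rewrite -(leq_exp2l 2 _ (ltnSn 1)) in hr; rewrite (leq_trans _ hr).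
have hxS : mkv b k \in S by rewrite hxk.
have nxu : mkv b k != u by rewrite hxk eq_sym.
have mkv2 : forall j, 0 < j < 2 ^ r.+1 -> mkv b (idx (mkv b j)) = mkv b j /\ idx (mkv b j) = j.
  by move=> j hj; have [E _] := mkvE b hj; rewrite E.
case: (classic (desc k (idx u))) => hd.
  exfalso.
  case: (ltnP k 2) => hk2.
  - have k1 : k = 1 by lia.
    have iu2 : 2 <= idx u.
      case: (ltnP (idx u) 2) => // h; exfalso; move/eqP: nxu; apply.
      have : idx u = 1 by have := idx_pos u; lia.
      by move=> E; rewrite -hcu E k1.
    have [c [hc1 hc2]] : exists c, desc c (idx u) /\ (c == 2) || (c == 3).
      by case: (desc23 iu2) => h; [exists 2|exists 3].
    have hv : 0 < 5 - c < 2 ^ r.+1 by rewrite expnS; apply/andP; split; lia.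
    have [E1 E2] := mkv2 _ hv.
    apply: (block (b:=b) (k:=k) (v:=mkv b (5 - c)) hk hxS hcu E1) => //.
    + by right; rewrite /leafb E2 -ltnNge; lia.
    + by apply/eqP => /(f_equal idx); rewrite E2 (mkvE b hkr).1; lia.
    + move=> p hp.
      have nd : ~ desc c (idx (mkv b (5 - c))).
        rewrite E2 => /desc_inv [|/desc_le]; lia.
      have [_ [y hy1 hy2]] := cut_down hp hc1 nd.
      by exists y => //; rewrite hy2 k1; lia.
    + exact: vis_all.
  - have hv : 0 < k./2 < 2 ^ r.+1 by rewrite expnS; apply/andP; split; lia.
    have [E1 E2] := mkv2 _ hv.
    apply: (block (b:=b) (k:=k) (v:=mkv b k./2) hk hxS hcu E1) => //.
    + by right; rewrite /leafb E2 -ltnNge; lia.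
    + by apply/eqP => /(f_equal idx); rewrite E2 (mkvE b hkr).1; lia.
    + move=> p hp.
      have nd : ~ desc k (idx (mkv b k./2)) by rewrite E2 => /desc_le; lia.
      by have [[y hy1 hy2] _] := cut_down hp hd nd; exists y.
    + exact: vis_all.
case: (boolP (leafb u)) => hl; first by split.
exfalso.
have hv : 0 < k.*2 < 2 ^ r.+1 by rewrite expnS; apply/andP; split; lia.
have [E1 E2] := mkv2 _ hv.
apply: (block (b:=b) (k:=k) (v:=mkv b k.*2) hk hxS hcu E1) => //.
+ by left.
+ by apply/eqP => /(f_equal idx); rewrite E2 (mkvE b hkr).1; lia.
+ move=> p hp.
  have dd : desc k (idx (mkv b k.*2)) by rewrite E2; apply: desc_half; rewrite doubleK; apply: desc_refl.
  exact: cut_up hp hd dd.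
+ exact: vis_all.
Qed.


Lemma walk_split2 u v p y y' : walk adj u v p -> y \in u :: p -> y' \in u :: p ->
  exists a c p1 p2 p3, ((a = y /\ c = y') \/ (a = y' /\ c = y)) /\
    walk adj u a p1 /\ walk adj a c p2 /\ walk adj c v p3 /\
    size p = size p1 + size p2 + size p3.
Proof.
move=> hw hy hy'.
have [p1 [p2 [E [w1 w2]]]] := walk_split hw hy.
move: hy'; rewrite E -cat_cons mem_cat => /orP[h|h].
  have [q1 [q2 [E' [v1 v2]]]] := walk_split w1 h.
  exists y', y, q1, q2, p2; split; first by right.
  do 3 (split; first by []).
  by rewrite E' !size_cat ?addnA.
have h' : y' \in y :: p2 by rewrite in_cons h orbT.
have [q1 [q2 [E' [v1 v2]]]] := walk_split w2 h'.
exists y, y', p1, q1, q2; split; first by left.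
do 3 (split; first by []).
by rewrite E' !size_cat ?addnA.
Qed.

Lemma ar5 (D Dua Dav Dac Dcv s1 s2 s3 : nat) : s1 + s2 + s3 <= D -> Dua <= s1 ->
  Dcv <= s3 -> D <= Dua + Dav -> Dav <= Dac + Dcv -> Dac + 2 <= s2 -> False.
Proof. lia. Qed.

Lemma F3 (S : {set V}) x x' u z : outer_mutual_visibility_set adj S ->
  x \in S -> x' \in S -> ~~ leafb x -> ~~ leafb x' -> cp x != cp x' ->
  u \in S -> leafb u -> 2 ^ r <= z < 2 ^ r.+1 ->
  desc (idx x) z -> desc (idx x') z ->
  ~ desc (idx x) (idx u) -> ~ desc (idx x') (idx u) -> False.
Proof.
move=> hS hx hx' xi xi' hcx hu ul hz dz dz' nu nu'.
have z0 : 0 < z < 2 ^ r.+1 by move: hz; have := expn_gt0 2 r; lia.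
set v := mkv false z.
have [Ez _] := mkvE false z0.
have vl : leafb v by rewrite /leafb Ez; case/andP: hz.
have [p [[hw hmin] hint]] := vis_all v hS hu.
have key : forall w t, w \in S -> ~~ leafb w -> t \in u :: p -> idx t = idx w -> cp t != cp w.
  move=> w t hwS hwl ht hi; apply/negP => /eqP hc.
  have E : t = w by apply: GTV_inj.
  subst t; have := hint w ht hwS; case/orP => /eqP E; subst w.
    by rewrite ul in hwl.
  by rewrite vl in hwl.
have [y hy1 hy2] := cut_up hw nu ltac:(by rewrite Ez).
have [y' hy1' hy2'] := cut_up hw nu' ltac:(by rewrite Ez).
have c1 := key _ _ hx xi hy1 hy2; have c2 := key _ _ hx' xi' hy1' hy2'.
have yi : ~~ leafb y by rewrite /leafb hy2.
have yi' : ~~ leafb y' by rewrite /leafb hy2'.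
have cyy : cp y != cp y'.
  by move: c1 c2 hcx; case: (cp y); case: (cp y'); case: (cp x); case: (cp x').
have [a [c [p1 [p2 [p3 [hac [w1 [w2 [w3 sz]]]]]]]]] := walk_split2 hw hy1 hy1'.
have hs : dT (idx a) (idx c) + 2 <= size p2.
  case: hac => -[Ea Ec]; subst a c.
    exact: (SW w2 yi yi' cyy).
  by apply: (SW w2 yi' yi); rewrite eq_sym.
have [q [wq sq]] := ewalk_x (b:=false) (mkv_leaf false ul) (mkv_leaf false vl).
have := hmin q wq; rewrite sq sz => hm.
exact: (ar5 hm (walk_dT w1) (walk_dT w3) (dT_tri (idx u) (idx a) (idx v))
  (dT_tri (idx a) (idx c) (idx v)) hs).
Qed.


Definition extf (b : bool) (j : nat) : nat := if j < 2 ^ r then b + j.*2 else j.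
Definition ext (b : bool) (k : nat) : nat := iter r (extf b) k.

Lemma ext_inv b k i : 0 < k < 2 ^ r ->
  let j := iter i (extf b) k in
  [/\ 0 < j < 2 ^ r.+1, desc k j, (j < 2 ^ r -> 2 ^ i <= j) & (j < 2 ^ r \/ odd j = b)].
Proof.
move=> /andP[k1 k2]; elim: i => [|i IH] /=.
  split; first (by apply/andP; split; rewrite ?expnS; lia); first exact: desc_refl.
    by rewrite expn0.
  by left.
move: IH; set j := iter i (extf b) k => -[/andP[j1 j2] dj hj oj].
rewrite /extf; case: (ltnP j (2 ^ r)) => H.
- have := hj H => hj'.
  split.
  + apply/andP; split; move: H; rewrite ?expnS; have := leq_b1 b; lia.
  + by apply: desc_half; rewrite half_bit_double.
  + by rewrite expnS; move=> _; have := leq_b1 b; lia.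
  + by right; rewrite oddD odd_double addbF oddb.
- split => //; last by case: oj => //; lia.
  by rewrite j1 j2.
Qed.

Lemma ext_prop b k : 0 < k < 2 ^ r ->
  2 ^ r <= ext b k < 2 ^ r.+1 /\ desc k (ext b k) /\ odd (ext b k) = b.
Proof.
move=> hk; have [/andP[j1 j2] dj hj oj] := ext_inv b r hk.
rewrite /ext; case: (ltnP (iter r (extf b) k) (2 ^ r)) => H.
  by have := hj H; lia.
split; first by apply/andP; split.
split => //; case: oj => //; lia.
Qed.

Definition sib (l : nat) : nat := if odd l then l.-1 else l.+1.

Lemma sib_prop l : 1 <= r -> 2 ^ r <= l < 2 ^ r.+1 ->
  2 ^ r <= sib l < 2 ^ r.+1 /\ (sib l)./2 = l./2 /\ sib l != l.
Proof.
move=> hr1 /andP[l1 l2].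
have [r' Er] : exists r', r = r'.+1 by exists r.-1; lia.
move: l1 l2; rewrite Er !expnS => l1 l2.
have E := odd_double_half l.
rewrite /sib; case: (boolP (odd l)) => ho; [rewrite ho in E|rewrite (negbTE ho) in E].
- split; [apply/andP; split|split]; lia.
- split; [apply/andP; split|split]; lia.
Qed.

Definition g (x : V) : V := if leafb x then x else mkv false (ext (cp x) (idx x)).

Lemma g_int x : ~~ leafb x ->
  idx (g x) = ext (cp x) (idx x) /\ desc (idx x) (idx (g x)) /\ odd (idx (g x)) = cp x.
Proof.
move=> hx; rewrite /g (negbTE hx).
have hk : 0 < idx x < 2 ^ r by rewrite idx_pos /= ltnNge.
have [/andP[e1 e2] [de oe]] := ext_prop (cp x) hk.
have [E _] := mkvE false (k := ext (cp x) (idx x)) ltac:(apply/andP; split; lia).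
by rewrite E.
Qed.

Lemma g_leaf x : leafb (g x).
Proof.
rewrite /g; case: (boolP (leafb x)) => // hx.
have [E _] := g_int hx; by rewrite /g (negbTE hx) in E; rewrite /leafb E; have [/andP[]] := ext_prop (cp x) (k:=idx x) ltac:(by rewrite idx_pos /= ltnNge).
Qed.

Lemma card_leaves : #|leaves| = 2 ^ r.
Proof.
have inj : injective (fun i : 'I_(2 ^ r) => mkv false (2 ^ r + i)).
  move=> i j /(f_equal idx).
  have hi : forall i : 'I_(2 ^ r), 0 < 2 ^ r + i < 2 ^ r.+1.
    by move=> i'; have := ltn_ord i'; have := expn_gt0 2 r; rewrite expnS; lia.
  rewrite (mkvE false (hi i)).1 (mkvE false (hi j)).1 => /eqP; rewrite eqn_add2l => /eqP.
  exact: val_inj.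
have -> : leaves = [set mkv false (2 ^ r + i) | i : 'I_(2 ^ r)].
  apply/setP => x; rewrite inE; apply/idP/imsetP.
    move=> hl; have hlt : idx x - 2 ^ r < 2 ^ r by have := idx_lt x; rewrite expnS /leafb in hl *; lia.
    exists (Ordinal hlt) => //=.
    by rewrite subnKC // mkv_leaf.
  case=> i _ ->.
  have hi : 0 < 2 ^ r + i < 2 ^ r.+1.
    by have := ltn_ord i; have := expn_gt0 2 r; rewrite expnS; lia.
  by rewrite /leafb (mkvE false hi).1 leq_addr.
by rewrite card_imset // card_ord.
Qed.


Lemma upper (S : {set V}) : 2 <= r -> outer_mutual_visibility_set adj S ->
  #|S| <= 2 ^ r /\ (#|S| = 2 ^ r -> S = leaves).
Proof.
move=> hr hS.
have r4 : 4 <= 2 ^ r by rewrite -(leq_exp2l 2 _ (ltnSn 1)) in hr; rewrite (leq_trans _ hr).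
have intne : forall x y, leafb x -> ~~ leafb y -> x != y.
  by move=> x y hx hy; apply/eqP => E; rewrite -E hx in hy.
have inj : {in S &, injective g}.
  move=> x y hx hy E.
  case: (boolP (leafb x)) => lx; case: (boolP (leafb y)) => ly.
  - by move: E; rewrite /g lx ly.
  - exfalso; have [_ [d _]] := g_int ly.
    have [_ nd] := F hr hS hy ly hx (intne _ _ lx ly) (mkv_leaf _ lx).
    have Gx : g x = x by rewrite /g lx.
    by apply: nd; rewrite -Gx E.
  - exfalso; have [_ [d _]] := g_int lx.
    have [_ nd] := F hr hS hx lx hy (intne _ _ ly lx) (mkv_leaf _ ly).
    have Gy : g y = y by rewrite /g ly.
    by apply: nd; rewrite -Gy -E.
  - case: (eqVneq (cp x) (cp y)) => hc.
      case: (eqVneq y x) => // ne.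
      have [ly' _] := F hr hS hx lx hy ne ltac:(by rewrite hc mkv_idx).
      by rewrite ly' in ly.
    have [_ [_ o1]] := g_int lx; have [_ [_ o2]] := g_int ly.
    by move: hc; rewrite -o1 -o2 E eqxx.
have sub : g @: S \subset leaves.
  by apply/subsetP => y /imsetP [x _ ->]; rewrite inE g_leaf.
have cS : #|S| = #|g @: S| by rewrite card_in_imset.
split; first by rewrite cS -card_leaves subset_leq_card.
move=> cS2.
have eqL : g @: S = leaves.
  by apply/eqP; rewrite eqEcard sub card_leaves -cS cS2 leqnn.
have SL : S \subset leaves.
  apply/subsetP => x hx; rewrite inE; apply/negPn/negP => lx.
  set k := idx x.
  have [gi [dg og]] := g_int lx.
  have lrange : 2 ^ r <= idx (g x) < 2 ^ r.+1.
    by have := g_leaf x; have := idx_lt (g x); rewrite /leafb => -> ->.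
  have [srange [shalf sne]] := sib_prop (ltnW hr) lrange.
  set s := sib (idx (g x)) in srange shalf sne.
  have s0 : 0 < s < 2 ^ r.+1 by move: srange; have := expn_gt0 2 r; lia.
  have [Es _] := mkvE false s0.
  have y0L : mkv false s \in leaves by rewrite inE /leafb Es; case/andP: srange.
  have ds : desc k s.
    case: (desc_inv dg) => E.
      by exfalso; move: lrange; rewrite E /k; have := idx_lt x; move: lx; rewrite /leafb; lia.
    by apply: desc_half; rewrite shalf.
  rewrite -eqL in y0L; case/imsetP: y0L => y hy Ey.
  case: (boolP (leafb y)) => ly.
    have [_ nd] := F hr hS hx lx hy (intne _ _ ly lx) (mkv_leaf _ ly).
    by apply: nd; move: Ey; rewrite /g ly => <-; rewrite Es.
  case: (eqVneq (cp y) (cp x)) => hcy.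
    case: (eqVneq y x) => [Eyx|ne].
      by move: sne; rewrite -Es Ey Eyx eqxx.
    have [ly' _] := F hr hS hx lx hy ne ltac:(by rewrite -hcy mkv_idx).
    by rewrite ly' in ly.
  have [u hu] : exists u, (u \in S) && leafb u.
    case: (boolP [exists u, (u \in S) && leafb u]) => [/existsP //|]; rewrite negb_exists => /forallP hn.
    exfalso.
    have : S \subset [set x; y].
      apply/subsetP => w hw; rewrite !inE.
      have lw : ~~ leafb w by have := hn w; rewrite hw.
      case: (eqVneq w x) => // nwx; apply/eqP.
      case: (eqVneq w y) => // nwy; exfalso.
      case: (eqVneq (cp w) (cp x)) => hcw.
        have [lw' _] := F hr hS hx lx hw nwx ltac:(by rewrite -hcw mkv_idx).
        by rewrite lw' in lw.
      have hcw' : cp w = cp y by move: hcw hcy; case: (cp w); case: (cp y); case: (cp x).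
      have [lw' _] := F hr hS hy ly hw nwy ltac:(by rewrite -hcw' mkv_idx).
      by rewrite lw' in lw.
    move/subset_leq_card; rewrite cards2 cS2; case: (_ != _); lia.
  case/andP: hu => hu lu.
  have [_ nd1] := F hr hS hx lx hu (intne _ _ lu lx) (mkv_leaf _ lu).
  have [_ nd2] := F hr hS hy ly hu (intne _ _ lu ly) (mkv_leaf _ lu).
  have [_ [dgy _]] := g_int ly.
  have dsy : desc (idx y) s by rewrite -Es Ey.
  by apply: (F3 hS hx hy lx ly _ hu lu srange ds dsy nd1 nd2); rewrite eq_sym.
by apply/eqP; rewrite eqEcard SL card_leaves cS2 leqnn.
Qed.

End GT.

Theorem mainTheorem4 (r : nat) (hr : 2 <= r) :
  (forall S : {set GTV r}, muo_set (@GTadj r) S -> #|S| = 2 ^ r) /\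
  (exists! S : {set GTV r}, muo_set (@GTadj r) S).
Proof.
have cL := card_leaves r; have oL := leaves_omv r.
have part1 : forall S : {set GTV r}, muo_set (@GTadj r) S -> #|S| = 2 ^ r.
  move=> S [hS hmax]; have [h1 _] := upper hr hS; have := hmax _ oL.
  by rewrite cL => h2; apply/eqP; rewrite eqn_leq h1 h2.
split => //.
exists (leaves r); split.
  by split => // S' hS'; rewrite cL; exact: (upper hr hS').1.
by move=> S hm; rewrite ((upper hr hm.1).2 (part1 _ hm)).
Qed.
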